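(* Fix $\theta$ with $\phi(\theta)<\beta$. Then $s_1(\theta,\tau^\star(\theta))<\beta$ if and only if $\tau_1^d(\theta)>\tau_2^d(\theta)$. Consequently $s_1(\theta,\tau^\star(\theta))>\beta$ if and only if $\tau_1^d(\theta)<\tau_2^d(\theta)$.
   Context: Setup. Let $Q\in\{0,1\}$ be a random variable with $\mathbb P(Q=1)=\pi\in(0,1)$, and let $(\Theta,\Gamma)$ be a real-valued random vector whose conditional joint density given $Q=1$ is $h_q$ and given $Q=0$ is $h_u$, both strictly positive on $\mathbb R^2$. Monotone likelihood ratio assumption: $l(\theta,\gamma)=h_q(\theta,\gamma)/h_u(\theta,\gamma)$ is continuous and strictly increasing in each of $\theta$ and $\gamma$, and for each $\theta$ the map $\gamma\mapsto l(\theta,\gamma)$ has infimum $0$ and supremum $+\infty$. Fix payoffs $x_q>0$, $x_u>0$. For $\tau\in(-x_u,x_q)$ let $A(\tau)=\mathbb 1\{l(\Theta,\Gamma)>\frac{(1-\pi)(x_u+\tau)}{\pi(x_q-\tau)}\}$, $s_1(\theta,\tau)=\mathbb E[Q\mid\Theta=\theta,A(\tau)=1]$, $s_2(\theta,\tau)=\mathbb E[A(\tau)\mid\Theta=\theta]$, $\phi(\theta)=\mathbb P(Q=1\mid\Theta=\theta)$. The equalizing prejudice $\tau^\star(\theta)$ is the unique $\tau\in(-x_u,x_q)$ with $s_1(\theta,\tau)=s_2(\theta,\tau)$. Fix a cutoff $c\in(-x_u,x_q)$ and let $\beta=(x_u+c)/(x_q+x_u)\in(0,1)$. The critical prejudice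 $\tau_k^d(\theta)$, $k=1,2$, is the unique $\tau\in(-x_u,x_q)$ with $s_k(\theta,\tau)=\beta$ (it exists for $k=1$ when $\phi(\theta)<\beta$, and always for $k=2$). *)

(* Defs.v *)
From HB Require Import structures.
From mathcomp Require Import all_boot all_order all_algebra.
From mathcomp Require Import all_classical all_reals all_analysis.
Set Implicit Arguments. Unset Strict Implicit. Unset Printing Implicit Defensive.
Import Order.TTheory GRing.Theory Num.Theory.
Import numFieldNormedType.Exports.
Local Open Scope classical_set_scope.
Local Open Scope ring_scope.

Section Model.
Variable R : realType.
Local Notation mu := (@lebesgue_measure R).

(* h : R -> R -> R is a joint density of (Theta, Gamma) on R^2 that is
   strictly positive, and whose theta-sections are integrable (so that the
   conditional quantities given Theta = theta are defined pointwise). *)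
Definition is_pos_density (h : R -> R -> R) : Prop :=
  [/\ (forall t g, 0 < h t g),
      measurable_fun setT (fun p : R * R => h p.1 p.2),
      (\int[mu \x mu]_p (h p.1 p.2)%:E = 1)%E
    & forall t, mu.-integrable setT (fun g => (h t g)%:E)].

Definition secint (h : R -> R -> R) (t : R) (A : set R) : R :=
  fine (\int[mu]_(g in A) (h t g)%:E).

Definition lr (hq hu : R -> R -> R) (t g : R) : R := hq t g / hu t g.

Definition kappa (pi xq xu tau : R) : R :=
  ((1 - pi) * (xu + tau)) / (pi * (xq - tau)).

(* { gamma | A(tau) = 1 } at Theta = theta *)
Definition accset (hq hu : R -> R -> R) (pi xq xu t tau : R) : set R :=
  [set g | kappa pi xq xu tau < lr hq hu t g].

(* s_1(theta,tau) = E[Q | Theta = theta, A(tau) = 1] *)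
Definition s1 (hq hu : R -> R -> R) (pi xq xu t tau : R) : R :=
  let A := accset hq hu pi xq xu t tau in
  pi * secint hq t A / (pi * secint hq t A + (1 - pi) * secint hu t A).

(* s_2(theta,tau) = E[A(tau) | Theta = theta] *)
Definition s2 (hq hu : R -> R -> R) (pi xq xu t tau : R) : R :=
  let A := accset hq hu pi xq xu t tau in
  (pi * secint hq t A + (1 - pi) * secint hu t A) /
  (pi * secint hq t setT + (1 - pi) * secint hu t setT).

(* phi(theta) = P(Q = 1 | Theta = theta) *)
Definition phi (hq hu : R -> R -> R) (pi t : R) : R :=
  pi * secint hq t setT / (pi * secint hq t setT + (1 - pi) * secint hu t setT).

Definition MLR (hq hu : R -> R -> R) : Prop :=
  [/\ continuous (fun p : R * R => lr hq hu p.1 p.2),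
      (forall t1 t2 g, t1 < t2 -> lr hq hu t1 g < lr hq hu t2 g),
      (forall t g1 g2, g1 < g2 -> lr hq hu t g1 < lr hq hu t g2),
      (forall t e, 0 < e -> exists g, lr hq hu t g < e)
    & (forall t M, exists g, M < lr hq hu t g)].

End Model.

(* Main.v *)
Require Import Defs.
From HB Require Import structures.
From mathcomp Require Import all_boot all_order all_algebra.
From mathcomp Require Import all_classical all_reals all_analysis.
From mathcomp Require Import ring lra.
Import Order.TTheory GRing.Theory Num.Theory.
Import numFieldNormedType.Exports.
Local Open Scope classical_set_scope.
Local Open Scope ring_scope.

Lemma contL (R : realType) (F : R -> R -> R) t :
  continuous (fun p : R * R => F p.1 p.2) -> continuous (F t).
Proof.
move=> cF g.
apply: (@continuous_comp _ _ _ (fun x => (t, x)) (fun p : R * R => F p.1 p.2)).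
  rewrite /prop_for /continuous_at. exact: (@cvg_pair _ _ _ (nbhs g) _ _ _ _ _ (fun=> t) id (cvg_cst t) cvg_id).
exact: cF.
Qed.

Local Notation mu := (@lebesgue_measure _).

Lemma Rint_gt0 (R : realType) (D : set (measurableTypeR R)) (f : R -> R) (a b : R) :
  measurable D -> (@lebesgue_measure R).-integrable D (EFin \o f) ->
  (forall x, D x -> 0 < f x) -> a < b -> `]a, b[ `<=` D ->
  0 < Rintegral (@lebesgue_measure R) D f.
Proof.
move=> mD intf f0 ab abD.
have ge0 : 0 <= Rintegral (@lebesgue_measure R) D f.
  by apply: Rintegral_ge0 => x Dx; exact/ltW/f0.
rewrite lt_neqAle ge0 andbT; apply/eqP => H0.
have fin := integrable_fin_num mD intf.
have I0 : (\int[@lebesgue_measure R]_(x in D) (EFin \o f) x = 0)%E.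
  by rewrite -(fineK fin) /= -[fine _]/(Rintegral _ D f) -H0.
have Iabs : (\int[@lebesgue_measure R]_(x in D) `|(EFin \o f) x| = 0)%E.
  rewrite -I0; apply: eq_integral => x /set_mem Dx /=.
  by rewrite ger0_norm //; exact/ltW/f0.
have /integrableP[mf _] := intf.
have [N [mN N0 sub]] := (ae_eq_integral_abs (@lebesgue_measure R) mD mf).1 Iabs.
have abN : `]a, b[ `<=` N.
  move=> x abx; apply: sub => /= H; have := H (abD _ abx).
  move=> fx0; have := f0 x (abD x abx); by rewrite -lte_fin fx0 ltxx.
have mab : measurable (`]a, b[%classic : set (measurableTypeR R)) by exact: measurable_itv.
have := le_measure (@lebesgue_measure R) (mem_set mab) (mem_set mN) abN.
move=> le; have N0' : (mu N <= 0)%E by rewrite N0.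
have := le_trans le N0'.
have := lebesgue_measure_itv `]a, b[.
move=> E le2; have : (lebesgue_measure (`]a,b[%classic : set R) <= 0)%E := le2.
rewrite E /= lte_fin ab -EFinD lee_fin leNgt subr_gt0 ab //.
Qed.

Lemma ivtL (R : realType) (L : R -> R) :
  continuous L -> (forall g1 g2, g1 < g2 -> L g1 < L g2) ->
  (forall e, 0 < e -> exists g, L g < e) -> (forall M, exists g, M < L g) ->
  forall v, 0 < v -> exists c, L c = v.
Proof.
move=> cL mL lo hi v v0.
have [a La] := lo v v0; have [b Lb] := hi v.
have ab : a < b.
  rewrite ltNge; apply/negP; rewrite le_eqVlt => /orP[/eqP ba|ba].
    by move: (lt_trans La Lb); rewrite ba ltxx.
  by move: (lt_trans (lt_trans La Lb) (mL _ _ ba)); rewrite ltxx.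
have hv : Num.min (L a) (L b) <= v <= Num.max (L a) (L b).
  by rewrite ge_min le_max (ltW La) (ltW Lb) orbT.
have [c _ Lc] := IVT (ltW ab) (continuous_subspaceT cL) hv.
by exists c.
Qed.

Lemma secintE (R : realType) (h : R -> R -> R) t (A : set R) :
  secint h t A = Rintegral (@lebesgue_measure R) A (h t).
Proof. by []. Qed.

Lemma key (R : realType) (hq hu : R -> R -> R) t (k k' : R) :
  is_pos_density hq -> is_pos_density hu -> MLR hq hu -> 0 < k -> k < k' ->
  let S := fun c => [set g | c < lr hq hu t g] in
  let D := S k `\` S k' in
  [/\ secint hq t (S k) = secint hq t (S k') + secint hq t D,
      secint hu t (S k) = secint hu t (S k') + secint hu t D,
      0 < secint hq t (S k'), 0 < secint hu t (S k') &
      (0 < secint hq t D /\ 0 < secint hu t D /\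
      secint hq t D <= k' * secint hu t D /\
      k' * secint hu t (S k') < secint hq t (S k'))].
Proof.
move=> [hq0 _ _ iq] [hu0 _ _ iu] [cF mt mg lo hi] k0 kk' S D.
set L := lr hq hu t.
have cL : continuous L := @contL R (lr hq hu) t cF.
have mL : measurable_fun setT L := measurable_realfun.continuous_measurable_fun cL.
have mS : forall c, measurable (S c : set (measurableTypeR R)).
  move=> c; have := mL measurableT _ (measurable_itv `]c, +oo[); rewrite setTI.
  have -> : S c = L @^-1` `]c, +oo[.
    by apply/seteqP; split => x /=; rewrite in_itv /= andbT.
  by [].
have mD : measurable (D : set (measurableTypeR R)) := measurableD (mS k) (mS k').
have iA : forall h (A : set (measurableTypeR R)), measurable A ->
    (@lebesgue_measure R).-integrable setT (fun g => (h t g)%:E) ->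
    (@lebesgue_measure R).-integrable A (EFin \o h t).
  by move=> h A mA ih; exact: (integrableS measurableT mA (subsetT A) ih).
have SS : S k' `<=` S k by move=> x /= /(lt_trans kk').
have dis : [disjoint S k' & D] by apply/disj_setPS => x [Sx [_ nSx]].
have split h : (@lebesgue_measure R).-integrable setT (fun g => (h t g)%:E) ->
    secint h t (S k) = secint h t (S k') + secint h t D.
  move=> ih; rewrite !secintE -{1}(setDUK SS).
  by apply: Rintegral_setU => //; apply: iA => //; rewrite setDUK.
have iq' := iq t; have iu' := iu t.
have [g0 Lg0] := hi t k'.
have sub1 : `]g0, g0 + 1[ `<=` S k'.
  move=> x; rewrite /= in_itv /= => /andP[gx _].
  exact: (lt_trans Lg0 (mg t _ _ gx)).
have g01 : g0 < g0 + 1 by rewrite ltrDl.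
have [c1 Lc1] := @ivtL R L cL (mg t) (lo t) (hi t) _ k0.
have [c2 Lc2] := @ivtL R L cL (mg t) (lo t) (hi t) _ (lt_trans k0 kk').
have c12 : c1 < c2.
  rewrite ltNge; apply/negP; rewrite le_eqVlt => /orP[/eqP ba|ba].
    by move: kk'; rewrite -Lc1 -Lc2 ba ltxx.
  by move: (mg t _ _ ba); rewrite -/L Lc1 Lc2 => /(lt_trans kk'); rewrite ltxx.
have sub2 : `]c1, c2[ `<=` D.
  move=> x; rewrite /= in_itv /= => /andP[c1x xc2]; split => /=.
    by rewrite -Lc1; exact: mg.
  by apply/negP; rewrite -leNgt -Lc2; apply/ltW; exact: mg.
have iS' := iA _ _ (mS k') iq'.
have iSu' := iA _ _ (mS k') iu'.
have iD := iA _ _ mD iq'.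
have iDu := iA _ _ mD iu'.
split; [exact: split|exact: split| | |].
- by rewrite secintE; apply: (@Rint_gt0 R _ _ _ _ (mS k') iS' (fun x _ => hq0 t x) g01 sub1).
- by rewrite secintE; apply: (@Rint_gt0 R _ _ _ _ (mS k') iSu' (fun x _ => hu0 t x) g01 sub1).
split.
  by rewrite secintE; apply: (@Rint_gt0 R _ _ _ _ mD iD (fun x _ => hq0 t x) c12 sub2).
split.
  by rewrite secintE; apply: (@Rint_gt0 R _ _ _ _ mD iDu (fun x _ => hu0 t x) c12 sub2).
have iZ : forall (A : set (measurableTypeR R)), measurable A ->
    (@lebesgue_measure R).-integrable A (EFin \o hu t) ->
    (@lebesgue_measure R).-integrable A (EFin \o (fun x => k' * hu t x)).
  move=> A mA ih.
  apply: (@eq_integrable _ _ R (@lebesgue_measure R) A mA _ _ _ (integrableZl mA k' ih)).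
  by move=> x _; rewrite /= EFinM.
have k'0 : 0 < k' := lt_trans k0 kk'.
split.
  rewrite !secintE -RintegralZl //; apply: le_Rintegral => //; first exact: iZ.
  move=> x [_ /= nS]; have : lr hq hu t x <= k' by rewrite leNgt; exact/negP.
  by rewrite /lr ler_pdivrMr // mulrC.
have ib : (@lebesgue_measure R).-integrable (S k')
    (EFin \o (fun x => hq t x - k' * hu t x)).
  apply: (@eq_integrable _ _ R (@lebesgue_measure R) _ (mS k') _ _ _
    (integrableB (mS k') iS' (iZ _ (mS k') iSu'))).
  by move=> x _; rewrite /= EFinB.
have := @Rint_gt0 R _ _ _ _ (mS k') ib _ g01 sub1.
rewrite RintegralB //; last exact: iZ.
rewrite RintegralZl // subr_gt0 !secintE; apply.
by move=> x /= Sx; rewrite subr_gt0 -ltr_pdivlMr.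
Qed.

Lemma final (R : realType) (f g : R -> R) (lo hi ts t1 t2 beta : R) :
  (forall x y, lo < x -> x < y -> y < hi -> f x < f y) ->
  (forall x y, lo < x -> x < y -> y < hi -> g y < g x) ->
  lo < ts < hi -> f ts = g ts -> lo < t1 < hi -> f t1 = beta ->
  lo < t2 < hi -> g t2 = beta ->
  (f ts < beta <-> t2 < t1) /\ (beta < f ts <-> t1 < t2).
Proof.
move=> fm gm /andP[ts0 ts1] fg /andP[t10 t11] ft1 /andP[t20 t21] gt2.
have mf x y : lo < x < hi -> lo < y < hi -> (f x < f y) = (x < y).
  move=> /andP[x0 x1] /andP[y0 y1].
  case: (ltgtP x y) => [xy|yx|->]; [by rewrite fm|apply/negbTE|by rewrite ltxx].
  by rewrite -leNgt ltW // fm.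
have mg x y : lo < x < hi -> lo < y < hi -> (g x < g y) = (y < x).
  move=> /andP[x0 x1] /andP[y0 y1].
  case: (ltgtP x y) => [xy|yx|->]; [apply/negbTE|by rewrite gm|by rewrite ltxx].
  by rewrite -leNgt ltW // gm.
have Its : lo < ts < hi by rewrite ts0 ts1.
have It1 : lo < t1 < hi by rewrite t10 t11.
have It2 : lo < t2 < hi by rewrite t20 t21.
have P1 : (f ts < beta) = (ts < t1) by rewrite -ft1 mf.
have P2 : (f ts < beta) = (t2 < ts) by rewrite fg -gt2 mg.
have Q1 : (beta < f ts) = (t1 < ts) by rewrite -ft1 mf.
have Q2 : (beta < f ts) = (ts < t2) by rewrite fg -gt2 mg.
split; split.
- by move=> H; apply: (@lt_trans _ _ ts); [rewrite -P2|rewrite -P1].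
- move=> H; case: (boolP (f ts < beta)) => // nP.
  have h1 : t1 <= ts by rewrite leNgt -P1.
  have h2 : ts <= t2 by rewrite leNgt -P2.
  by have := le_trans h1 h2; rewrite leNgt H.
- by move=> H; apply: (@lt_trans _ _ ts); [rewrite -Q1|rewrite -Q2].
- move=> H; case: (boolP (beta < f ts)) => // nP.
  have h1 : ts <= t1 by rewrite leNgt -Q1.
  have h2 : t2 <= ts by rewrite leNgt -Q2.
  by have := le_trans h2 h1; rewrite leNgt H.
Qed.

Lemma kappa_mono (R : realType) (pi xq xu tau tau' : R) :
  0 < pi < 1 -> 0 < xq -> 0 < xu -> - xu < tau -> tau < tau' -> tau' < xq ->
  0 < kappa pi xq xu tau /\ kappa pi xq xu tau < kappa pi xq xu tau'.
Proof.
move=> /andP[p0 p1] xq0 xu0 h1 h2 h3.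
have a0 : 0 < 1 - pi by rewrite subr_gt0.
have b0 : 0 < xu + tau by rewrite -(opprK tau) subr_gt0 ltrNl.
have c0 : 0 < xq - tau by rewrite subr_gt0 (lt_trans h2 h3).
have c0' : 0 < xq - tau' by rewrite subr_gt0.
rewrite /kappa; split.
  by apply: divr_gt0; apply: mulr_gt0.
rewrite ltr_pdivrMr ?mulr_gt0 // mulrAC ltr_pdivlMr ?mulr_gt0 //.
have h : 0 < (1 - pi) * pi * ((tau' - tau) * (xq + xu)).
  by rewrite !mulr_gt0 // ?subr_gt0 // addr_gt0.
rewrite -subr_gt0; apply: (lt_le_trans h); rewrite le_eqVlt; apply/orP; left.
apply/eqP; ring.
Qed.

Lemma alg1 (R : realType) (pi a b d e k' : R) :
  0 < pi < 1 -> 0 < a -> 0 < b -> 0 < d -> 0 < e -> 0 < k' ->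
  d <= k' * e -> k' * b < a ->
  pi * (a + d) / (pi * (a + d) + (1 - pi) * (b + e)) <
  pi * a / (pi * a + (1 - pi) * b).
Proof.
move=> /andP[p0 p1] a0 b0 d0 e0 k0 le lt.
have q0 : 0 < 1 - pi by rewrite subr_gt0.
have db : d * b < a * e by nra.
rewrite ltr_pdivrMr; last by nra.
rewrite mulrAC ltr_pdivlMr; last by nra.
have pq : 0 < pi * (1 - pi) by nra.
nra.
Qed.

Lemma alg2 (R : realType) (pi a b d e T : R) :
  0 < pi < 1 -> 0 < d -> 0 < e -> 0 < T ->
  (pi * a + (1 - pi) * b) / T < (pi * (a + d) + (1 - pi) * (b + e)) / T.
Proof.
move=> /andP[p0 p1] d0 e0 T0.
rewrite ltr_pM2r ?invr_gt0 //.
have q0 : 0 < 1 - pi by rewrite subr_gt0.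
nra.
Qed.

Lemma secintT_gt0 (R : realType) (h : R -> R -> R) t :
  is_pos_density h -> 0 < secint h t setT.
Proof.
move=> [h0 _ _ ih].
rewrite secintE.
apply: (@Rint_gt0 R setT (h t) 0 1 measurableT (ih t) (fun x _ => h0 t x) ltr01).
by [].
Qed.

Lemma mono (R : realType) (hq hu : R -> R -> R) (pi xq xu t tau tau' : R) :
  0 < pi < 1 -> 0 < xq -> 0 < xu ->
  is_pos_density hq -> is_pos_density hu -> MLR hq hu ->
  - xu < tau -> tau < tau' -> tau' < xq ->
  s1 hq hu pi xq xu t tau < s1 hq hu pi xq xu t tau' /\
  s2 hq hu pi xq xu t tau' < s2 hq hu pi xq xu t tau.
Proof.
move=> pi01 xq0 xu0 dq du mlr h1 h2 h3.
have [k0 kk'] := @kappa_mono R pi xq xu tau tau' pi01 xq0 xu0 h1 h2 h3.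
have := key R hq hu t _ _ dq du mlr k0 kk'.
move=> /= [e1 e2 a0 b0 [d0 [e0 [le lt]]]].
have k'0 := lt_trans k0 kk'.
rewrite /s1 /s2 /accset /= e1 e2; split.
  exact: (@alg1 R pi _ _ _ _ _ pi01) a0 b0 d0 e0 k'0 le lt.
apply: alg2 => //.
have := @secintT_gt0 R hq t dq; have := @secintT_gt0 R hu t du.
case/andP: pi01 => p0 p1 u0 q0.
have q1 : 0 < 1 - pi by rewrite subr_gt0.
by apply: addr_gt0; apply: mulr_gt0.
Qed.

Theorem mainTheorem10 (R : realType) (hq hu : R -> R -> R) (pi xq xu c : R)
  (theta tstar t1 t2 : R) :
  0 < pi < 1 -> 0 < xq -> 0 < xu ->
  is_pos_density hq -> is_pos_density hu -> MLR hq hu ->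
  - xu < c < xq ->
  let beta := (xu + c) / (xq + xu) in
  phi hq hu pi theta < beta ->
  (* tstar = tau^*(theta): the equalizing prejudice *)
  - xu < tstar < xq ->
  s1 hq hu pi xq xu theta tstar = s2 hq hu pi xq xu theta tstar ->
  (* t1 = tau_1^d(theta), t2 = tau_2^d(theta): the critical prejudices *)
  - xu < t1 < xq -> s1 hq hu pi xq xu theta t1 = beta ->
  - xu < t2 < xq -> s2 hq hu pi xq xu theta t2 = beta ->
  (s1 hq hu pi xq xu theta tstar < beta <-> t2 < t1) /\
  (beta < s1 hq hu pi xq xu theta tstar <-> t1 < t2).
Proof.
move=> pi01 xq0 xu0 dq du mlr _ beta _ Hs Heq H1 E1 H2 E2.
apply: (@final R (s1 hq hu pi xq xu theta) (s2 hq hu pi xq xu theta)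
  (- xu) xq tstar t1 t2 beta) => //.
- by move=> x y hx hxy hy; have [] := @mono R hq hu pi xq xu theta x y pi01 xq0 xu0 dq du mlr hx hxy hy.
- by move=> x y hx hxy hy; have [] := @mono R hq hu pi xq xu theta x y pi01 xq0 xu0 dq du mlr hx hxy hy.
Qed.
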